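(* Let $\delta>0$, $m>64\pi^2$, $\kappa>0$, $\mu^\star>0$, and let $\varepsilon\in(0,1)$, $\ell>0$, $\gamma>0$ satisfy: $\ell\ge\delta$; $-2^5\xi^2+(\mu^\star\varepsilon+6\ell)\xi-(\gamma+1)\ell\le0$ for all $\xi\in\mathbb{R}$; $2\gamma^2-3\ell\ge0$; $e^\varepsilon<\frac{1+2\kappa}{1+\kappa}$; $e^{(\gamma+1)\varepsilon}(1+3\varepsilon^3)<\frac{m}{64\pi^2}$; and $e^{(\ell-\delta)t}(1+(\varepsilon-\ell t)^3)\ge1+\varepsilon^3$ for all $t\in(0,\varepsilon/\ell)$. Put $\tau(t)=\varepsilon-\ell t$, $a(t)=2^5e^{(\gamma+1)\tau}$, $b(t)=8e^{\tau}$ and $$\underline U(s,t):=\frac{a(s^{3/2}+3\tau^3s)}{(s^{1/2}+\tau^3)^3},\qquad \underline W(s,t):=\frac{bs}{s^{1/2}+\tau^3},\qquad(s,t)\in[0,1]\times[0,\varepsilon/\ell).$$ Then for each $t\in[0,\varepsilon/\ell)$ the map $s\mapsto\underline W(s,t)$ on $[0,1]$ is nonnegative, increasing and concave; $\underline W(0,t)=0$ for all $t\in[0,\varepsilon/\ell)$; $$\sup_{t\in(0,\varepsilon/\ell)}\underline W(1,t)<8\cdot\frac{1+2\kappa}{1+\kappa};$$ and $\mathcal Q(\underline U,\underline W)\le0$ for all $(s,t)\in(0,1)\times(0,\varepsilon/\ell)$.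
   Context: For functions $\phi,\psi$ the operator $\mathcal Q$ is $\mathcal Q(\phi,\psi):=\psi_t-16s^{3/2}\psi_{ss}+\delta\psi-\phi$. *)

(* Defs.v *)
From Stdlib Require Import Reals Lra.
From Coquelicot Require Import Coquelicot.
Open Scope R_scope.

Definition tau (eps l t : R) : R := eps - l * t.
Definition a_fun (eps l gam t : R) : R := 2 ^ 5 * exp ((gam + 1) * tau eps l t).
Definition b_fun (eps l t : R) : R := 8 * exp (tau eps l t).

Definition Ulow (eps l gam s t : R) : R :=
  a_fun eps l gam t * (s * sqrt s + 3 * (tau eps l t) ^ 3 * s)
  / (sqrt s + (tau eps l t) ^ 3) ^ 3.

Definition Wlow (eps l s t : R) : R :=
  b_fun eps l t * s / (sqrt s + (tau eps l t) ^ 3).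

Definition Qop (delta : R) (phi psi : R -> R -> R) (s t : R) : R :=
  Derive (fun t' => psi s t') t
  - 16 * (s * sqrt s) * Derive (fun s1 => Derive (fun s2 => psi s2 t) s1) s
  + delta * psi s t - phi s t.

(* Main.v *)
Require Import Defs.
From Stdlib Require Import Reals Lra Psatz.
From Coquelicot Require Import Coquelicot.
Open Scope R_scope.

Lemma exp2_lb (y : R) : 0 <= y -> 1 + y + y^2/2 <= exp y.
Proof.
  intros Hy.
  destruct (MVT_cor4 (fun z => exp z - 1 - z - z^2/2) (fun z => exp z - 1 - z) 0 y)
    with (b := y) as [c [Hc _]].
  - intros c _. auto_derive; auto. field.
  - rewrite Rminus_0_r, Rabs_pos_eq; lra.
  - rewrite exp_0 in Hc. pose proof (exp_ineq1_le c). nra.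
Qed.

Lemma dW_s b c s : 0 < s -> 0 < c ->
  is_derive (fun s2 => b * s2 / (sqrt s2 + c)) s (b * (sqrt s / 2 + c) / (sqrt s + c) ^ 2).
Proof.
  intros Hs Hc. pose proof (sqrt_lt_R0 s Hs) as Hq.
  auto_derive.
  - repeat split; lra.
  - assert (Hx: sqrt s * sqrt s = s) by (apply sqrt_sqrt; lra).
    set (x := sqrt s) in *. clearbody x. subst s. field. lra.
Qed.

Lemma d2W_s b c s : 0 < s -> 0 < c ->
  is_derive (fun s1 => b * (sqrt s1 / 2 + c) / (sqrt s1 + c) ^ 2) s
    (- b * (sqrt s + 3 * c) / (4 * sqrt s * (sqrt s + c) ^ 3)).
Proof.
  intros Hs Hc. pose proof (sqrt_lt_R0 s Hs) as Hq.
  auto_derive.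
  - repeat split; try lra; intro; nra.
  - assert (Hx: sqrt s * sqrt s = s) by (apply sqrt_sqrt; lra).
    set (x := sqrt s) in *. clearbody x. subst s. field. lra.
Qed.

Lemma dW_t eps l s t : 0 <= s -> 0 < eps - l * t ->
  is_derive (fun t' => Wlow eps l s t') t
   (8 * s * exp (eps - l * t) * l * (3 * (eps - l*t)^2 - (sqrt s + (eps - l*t)^3))
      / (sqrt s + (eps - l*t)^3)^2).
Proof.
  intros Hs Ht. pose proof (sqrt_pos s).
  assert (0 < (eps - l*t)^3) by (apply pow_lt; lra).
  unfold Wlow, b_fun, tau.
  auto_derive.
  - lra.
  - unfold Rminus in *. field. lra.
Qed.

Lemma incr_alg b c v1 v2 : 0 < b -> 0 < c -> 0 <= v1 -> v1 < v2 ->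
  b * (v1 * v1) / (v1 + c) < b * (v2 * v2) / (v2 + c).
Proof.
  intros Hb Hc H1 H2.
  assert (E: b * (v2 * v2) / (v2 + c) - b * (v1 * v1) / (v1 + c)
     = b * (v1 * v2 * (v2 - v1) + c * (v2 * v2 - v1 * v1)) / ((v1 + c) * (v2 + c)))
    by (field; lra).
  assert (0 < b * (v1 * v2 * (v2 - v1) + c * (v2 * v2 - v1 * v1)) / ((v1 + c) * (v2 + c))).
  { unfold Rdiv. apply Rmult_lt_0_compat.
    - apply Rmult_lt_0_compat; [lra|].
      assert (0 <= v1 * v2 * (v2 - v1)) by (apply Rmult_le_pos; [apply Rmult_le_pos|]; lra).
      assert (0 < c * (v2 * v2 - v1 * v1)).
      { apply Rmult_lt_0_compat; [lra|]. replace (v2*v2 - v1*v1) with ((v2-v1)*(v2+v1)) by ring.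
        apply Rmult_lt_0_compat; lra. }
      lra.
    - apply Rinv_0_lt_compat. apply Rmult_lt_0_compat; lra. }
  lra.
Qed.

Lemma tan_alg b c u v : 0 < b -> 0 < c -> 0 <= u -> 0 <= v ->
  b * (v * v) / (v + c) <= b * (u * u) / (u + c) + b * (u / 2 + c) / (u + c) ^ 2 * (v * v - u * u).
Proof.
  intros Hb Hc Hu Hv.
  assert (E: b * (u * u) / (u + c) + b * (u / 2 + c) / (u + c) ^ 2 * (v * v - u * u)
      - b * (v * v) / (v + c) = b * ((v - u)^2 * ((u + 2*c) * v + u * c)) / (2 * (u + c)^2 * (v + c)))
    by (field; lra).
  assert (0 <= b * ((v - u)^2 * ((u + 2*c) * v + u * c)) / (2 * (u + c)^2 * (v + c))).
  { unfold Rdiv. apply Rmult_le_pos.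
    - apply Rmult_le_pos; [lra|]. apply Rmult_le_pos; [apply pow2_ge_0|].
      assert (0 <= (u + 2*c) * v) by (apply Rmult_le_pos; lra).
      assert (0 <= u * c) by (apply Rmult_le_pos; lra). lra.
    - left. apply Rinv_0_lt_compat. assert (0 < (u+c)^2) by (apply pow_lt; lra). nra. }
  lra.
Qed.

Lemma tau_pos eps l t : 0 < l -> t < eps / l -> 0 < eps - l * t.
Proof.
  intros Hl Ht. assert (l * (eps / l) = eps) by (field; lra).
  assert (l * t < l * (eps / l)) by (apply Rmult_lt_compat_l; lra). lra.
Qed.

Lemma Q_part (delta eps l gam s t : R) :
  0 < delta -> 0 < l -> 0 < gam -> delta <= l -> 2 * gam ^ 2 - 3 * l >= 0 ->
  0 < s -> 0 < eps - l * t ->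
  Qop delta (Ulow eps l gam) (Wlow eps l) s t <= 0.
Proof.
  intros Hd Hl Hg Hdl Hgl Hs Ht.
  set (T := eps - l * t) in *.
  assert (Hc : 0 < T ^ 3) by (apply pow_lt; lra).
  pose proof (sqrt_lt_R0 s Hs) as Hq.
  unfold Qop.
  replace (Derive (fun t' : R => Wlow eps l s t') t) with
   (8 * s * exp (eps - l * t) * l * (3 * (eps - l*t)^2 - (sqrt s + (eps - l*t)^3))
      / (sqrt s + (eps - l*t)^3)^2)
   by (symmetry; apply is_derive_unique; apply dW_t; [lra|exact Ht]).
  assert (HD : Derive (fun s1 : R => Derive (fun s2 : R => Wlow eps l s2 t) s1) s
     = - b_fun eps l t * (sqrt s + 3 * T^3) / (4 * sqrt s * (sqrt s + T^3) ^ 3)).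
  { rewrite (Derive_ext_loc _ (fun s1 => b_fun eps l t * (sqrt s1 / 2 + T^3) / (sqrt s1 + T^3) ^ 2)).
    - apply is_derive_unique. apply d2W_s; lra.
    - exists (mkposreal s Hs). intros y Hy.
      unfold ball in Hy; simpl in Hy; unfold AbsRing_ball, abs, minus, plus, opp in Hy; simpl in Hy.
      destruct (Rabs_def2 _ _ Hy).
      apply is_derive_unique. apply (dW_s (b_fun eps l t) (T^3) y); lra. }
  rewrite HD. clear HD.
  unfold Ulow, Wlow, a_fun, b_fun, tau. fold T.
  replace ((gam + 1) * T) with (T + gam * T) by ring.
  rewrite exp_plus.
  assert (HG := exp2_lb (gam * T) ltac:(nra)).
  pose proof (exp_pos T) as HE.
  set (G := exp (gam * T)) in *. set (E := exp T) in *.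
  assert (Hx: sqrt s * sqrt s = s) by (apply sqrt_sqrt; lra).
  set (x := sqrt s) in *. clearbody x. subst s.
  set (c := T ^ 3) in *.
  set (Br := (delta - l) * (x + c)^2 + 3 * l * T^2 * (x + c) - 4 * (G - 1) * (x + 3 * c)).
  assert (Eq : 8 * (x * x) * E * l * (3 * T ^ 2 - (x + c)) / (x + c) ^ 2 -
   16 * (x * x * x) * (- (8 * E) * (x + 3 * c) / (4 * x * (x + c) ^ 3)) +
   delta * (8 * E * (x * x) / (x + c)) -
   2 ^ 5 * (E * G) * (x * x * x + 3 * c * (x * x)) / (x + c) ^ 3
   = 8 * E * (x * x) / (x + c) ^ 3 * Br).
  { unfold Br. field. lra. }
  rewrite Eq.
  assert (HBr : Br <= 0).
  { unfold Br.
    assert (h1 : (delta - l) * (x + c)^2 <= 0).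
    { assert (0 <= (x+c)^2) by apply pow2_ge_0. nra. }
    assert (h2 : 3 * l * T^2 * (x + c) <= 2 * gam^2 * T^2 * (x + 3 * c)).
    { assert (0 <= T^2) by apply pow2_ge_0.
      assert (3 * l * T^2 <= 2 * gam^2 * T^2) by nra.
      assert (0 <= 2 * gam ^ 2 * T ^ 2) by nra.
      nra. }
    assert (h3 : 4 * (gam * T + (gam * T)^2 / 2) * (x + 3 * c) <= 4 * (G - 1) * (x + 3 * c)).
    { apply Rmult_le_compat_r; lra. }
    assert (h4 : 0 < gam * T * (x + 3 * c)).
    { apply Rmult_lt_0_compat; [apply Rmult_lt_0_compat|]; lra. }
    replace (4 * (gam * T + (gam * T)^2 / 2) * (x + 3 * c))
      with (4 * (gam * T * (x + 3 * c)) + 2 * gam^2 * T^2 * (x + 3 * c)) in h3 by field.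
    lra. }
  assert (0 <= 8 * E * (x * x) / (x + c) ^ 3).
  { unfold Rdiv. apply Rmult_le_pos.
    - assert (0 <= x * x) by nra. nra.
    - left. apply Rinv_0_lt_compat. apply pow_lt. lra. }
  nra.
Qed.

Theorem lemma3p6 (delta m kappa mu eps l gam : R) :
  0 < delta -> 64 * PI ^ 2 < m -> 0 < kappa -> 0 < mu ->
  0 < eps < 1 -> 0 < l -> 0 < gam ->
  delta <= l ->
  (forall xi : R, - 2 ^ 5 * xi ^ 2 + (mu * eps + 6 * l) * xi - (gam + 1) * l <= 0) ->
  2 * gam ^ 2 - 3 * l >= 0 ->
  exp eps < (1 + 2 * kappa) / (1 + kappa) ->
  exp ((gam + 1) * eps) * (1 + 3 * eps ^ 3) < m / (64 * PI ^ 2) ->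
  (forall t : R, 0 < t < eps / l ->
     exp ((l - delta) * t) * (1 + (eps - l * t) ^ 3) >= 1 + eps ^ 3) ->
  (forall t : R, 0 <= t < eps / l ->
     (forall s, 0 <= s <= 1 -> 0 <= Wlow eps l s t)
     /\ (forall s1 s2, 0 <= s1 -> s1 < s2 -> s2 <= 1 -> Wlow eps l s1 t < Wlow eps l s2 t)
     /\ (forall x y lam, 0 <= x <= 1 -> 0 <= y <= 1 -> 0 <= lam <= 1 ->
           lam * Wlow eps l x t + (1 - lam) * Wlow eps l y t
           <= Wlow eps l (lam * x + (1 - lam) * y) t))
  /\ (forall t : R, 0 <= t < eps / l -> Wlow eps l 0 t = 0)
  /\ Rbar_lt (Lub_Rbar (fun w => exists t, 0 < t < eps / l /\ w = Wlow eps l 1 t))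
             (Finite (8 * ((1 + 2 * kappa) / (1 + kappa))))
  /\ (forall s t : R, 0 < s < 1 -> 0 < t < eps / l ->
        Qop delta (Ulow eps l gam) (Wlow eps l) s t <= 0).
Proof.
  intros Hd Hm Hk Hmu He Hl Hg Hdl Hxi Hgl Hexp Hexp2 Hlast.
  split; [|split; [|split]].
  - intros t Ht.
    pose proof (tau_pos eps l t Hl (proj2 Ht)) as HT.
    assert (Hc : 0 < tau eps l t ^ 3) by (apply pow_lt; unfold tau; lra).
    assert (Hb : 0 < b_fun eps l t) by (unfold b_fun; pose proof (exp_pos (tau eps l t)); lra).
    unfold Wlow.
    set (b := b_fun eps l t) in *. set (c := tau eps l t ^ 3) in *.
    split; [|split].
    + intros s Hs. pose proof (sqrt_pos s).
      unfold Rdiv. apply Rmult_le_pos; [nra|]. left. apply Rinv_0_lt_compat. lra.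
    + intros s1 s2 H1 H12 H2.
      assert (H := incr_alg b c (sqrt s1) (sqrt s2) Hb Hc (sqrt_pos s1)
                     (sqrt_lt_1 s1 s2 H1 ltac:(lra) H12)).
      rewrite !sqrt_sqrt in H by lra. exact H.
    + intros x y lam Hx Hy Hlam.
      set (z := lam * x + (1 - lam) * y).
      assert (Hz : 0 <= z) by (unfold z; nra).
      set (D := b * (sqrt z / 2 + c) / (sqrt z + c) ^ 2).
      assert (Tx := tan_alg b c (sqrt z) (sqrt x) Hb Hc (sqrt_pos z) (sqrt_pos x)).
      assert (Ty := tan_alg b c (sqrt z) (sqrt y) Hb Hc (sqrt_pos z) (sqrt_pos y)).
      rewrite !sqrt_sqrt in Tx by lra. rewrite !sqrt_sqrt in Ty by lra.
      fold D in Tx, Ty.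
      set (fx := b * x / (sqrt x + c)) in *.
      set (fy := b * y / (sqrt y + c)) in *.
      set (fz := b * z / (sqrt z + c)) in *.
      assert (A1 : lam * fx <= lam * (fz + D * (x - z))) by (apply Rmult_le_compat_l; lra).
      assert (A2 : (1 - lam) * fy <= (1 - lam) * (fz + D * (y - z))) by (apply Rmult_le_compat_l; lra).
      assert (A3 : lam * (fz + D * (x - z)) + (1 - lam) * (fz + D * (y - z)) = fz) by (unfold z; ring).
      lra.
  - intros t Ht. unfold Wlow. rewrite Rmult_0_r. unfold Rdiv. apply Rmult_0_l.
  - set (S := fun w => exists t, 0 < t < eps / l /\ w = Wlow eps l 1 t).
    assert (Hub : is_ub_Rbar S (8 * exp eps)).
    { intros w [t [Ht ->]]. simpl.
      pose proof (tau_pos eps l t Hl (proj2 Ht)) as HT.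
      unfold Wlow, b_fun. rewrite sqrt_1.
      assert (0 < tau eps l t ^ 3) by (apply pow_lt; unfold tau; lra).
      assert (exp (tau eps l t) <= exp eps).
      { unfold tau. left. apply exp_increasing. nra. }
      pose proof (exp_pos (tau eps l t)).
      apply (Rmult_le_reg_r (1 + tau eps l t ^ 3)); [lra|].
      field_simplify; [|lra]. nra. }
    destruct (Lub_Rbar_correct S) as [_ Hlub].
    specialize (Hlub _ Hub).
    destruct (Lub_Rbar S) as [r| |]; simpl in *; try tauto; lra.
  - intros s t Hs Ht.
    apply Q_part; try lra.
    apply tau_pos; lra.
Qed.
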